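(* Fix a constant $c>0$. The class $\mathcal{A}_c$ of bucket-based sorting algorithms, viewed as functions on arrays $x\in\mathbb{R}^n$ via $x\mapsto\mathrm{cost}(A,x)$ (the number of comparisons used by $A$ on $x$), has pseudo-dimension $O(n^{1+c})$.
   Context: A bucket-based sorting algorithm in $\mathcal{A}_c$ (for sorting $n$ reals $a_1,\dots,a_n$ in the comparison model) is specified by: (i) $n$ bucket boundaries $b_1<b_2<\dots<b_n$; (ii) for each $i=1,\dots,n$, a search tree $T_i$ described by $O(n^c)$ bits used to place element $a_i$ into its correct bucket (a search not resolved by $T_i$ is completed by standard binary search over the buckets). The algorithm distributes each element into its bucket this way, sorts each bucket with InsertionSort, and concatenates. Pseudo-dimension: a finite set $\{x_1,\dots,x_m\}$ is shattered by a class $\mathcal{H}$ of real functions if there exist reals $r_i$ such that for every $T\subseteq\{1,\dots,m\}$ some $h\in\mathcal{H}$ has $h(x_i)>r_i\iff i\in T$; the pseudo-dimension is the largest size of a shattered set. *)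

(* Defs.v *)
From Stdlib Require Import Reals List Arith.
Import ListNotations.
Open Scope R_scope.

Definition shatters_on {D : Type} (Dom : D -> Prop) (H : (D -> R) -> Prop)
    (m : nat) (pts : nat -> D) : Prop :=
  (forall i, (i < m)%nat -> Dom (pts i)) /\
  (forall i j, (i < m)%nat -> (j < m)%nat -> pts i = pts j -> i = j) /\
  exists r : nat -> R,
    forall T : nat -> Prop,
      exists h, H h /\ forall i, (i < m)%nat -> (h (pts i) > r i <-> T i).

(* The boundaries are b 1 < ... < b n (b : nat -> R, only the
   indices 1..n matter).  The buckets are indexed 0..n: bucket j is
   {x | b_j < x <= b_(j+1)} with b_0 = -oo, b_(n+1) = +oo, i.e. the bucket of
   x is the number of boundaries strictly below x.  Every comparison of two
   reals counts as one comparison. *)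

(* A search tree: each internal node compares the element x with boundary b k
   (going left if x <= b k, right otherwise). *)
Inductive stree : Type :=
  | SLeaf : stree
  | SNode : nat -> stree -> stree -> stree.

Fixpoint stree_ok (n : nat) (t : stree) : Prop :=
  match t with
  | SLeaf => True
  | SNode k l r => (1 <= k <= n)%nat /\ stree_ok n l /\ stree_ok n r
  end.

(* Run the tree on x, maintaining the range [lo, hi] of buckets consistent with
   the comparisons made so far; returns (lo, hi, #comparisons). *)
Fixpoint tree_search (b : nat -> R) (x : R) (t : stree) (lo hi : nat)
    : nat * nat * nat :=
  match t with
  | SLeaf => (lo, hi, 0%nat)
  | SNode k l r =>
      if Rle_dec x (b k) then
        let '(lo', hi', c) := tree_search b x l lo (Nat.min hi (k - 1)) in
        (lo', hi', S c)
      else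
        let '(lo', hi', c) := tree_search b x r (Nat.max lo k) hi in
        (lo', hi', S c)
  end.

(* Standard binary search over the bucket range [lo, hi]; returns
   (bucket, #comparisons).  fuel is only a termination device. *)
Fixpoint bsearch (fuel : nat) (b : nat -> R) (x : R) (lo hi : nat) : nat * nat :=
  match fuel with
  | O => (lo, 0%nat)
  | S f =>
      if (lo <? hi)%nat then
        let mid := ((lo + hi + 1) / 2)%nat in
        if Rle_dec x (b mid) then
          let '(j, c) := bsearch f b x lo (mid - 1) in (j, S c)
        else
          let '(j, c) := bsearch f b x mid hi in (j, S c)
      else (lo, 0%nat)
  end.

Definition place (n : nat) (b : nat -> R) (t : stree) (x : R) : nat * nat :=
  let '(lo, hi, c1) := tree_search b x t 0 n in
  let '(j, c2) := bsearch (S n) b x lo hi in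
  (j, (c1 + c2)%nat).

(* The sorted prefix is kept in decreasing order (head = last
   element of the sorted prefix); a new key is compared with the elements of
   the prefix from the right, stopping at the first one <= key. *)
Fixpoint ins (x : R) (l : list R) : nat * list R :=
  match l with
  | [] => (0%nat, [x])
  | y :: l' =>
      if Rle_dec y x then (1%nat, x :: l)
      else let '(c, l'') := ins x l' in (S c, y :: l'')
  end.

Fixpoint isort_aux (acc : list R) (l : list R) : nat :=
  match l with
  | [] => 0%nat
  | x :: l' => let '(c, acc') := ins x acc in (c + isort_aux acc' l')%nat
  end.

Definition isort_cost (l : list R) : nat := isort_aux [] l.

(* An algorithm: boundaries and, for each i = 1..n, the bit string describing
   the search tree T_i (the i-th entry of ba_codes, counted from 0). *)
Record bucket_alg : Type := mkBucketAlg {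
  ba_bound : nat -> R;
  ba_codes : list (list bool)
}.

(* Elements are distributed in the order a_1, ..., a_n, each bucket is
   then sorted by InsertionSort (its elements in order of arrival), and the
   buckets are concatenated (no comparisons). *)
Definition cost (dec : nat -> list bool -> stree) (n : nat)
    (A : bucket_alg) (x : list R) : nat :=
  let b := ba_bound A in
  let pl := fun i => place n b (dec n (nth i (ba_codes A) [])) (nth i x 0) in
  let dist_cost := fold_right Nat.add 0%nat (map (fun i => snd (pl i)) (seq 0 n)) in
  let bucket j := map (fun i => nth i x 0)
                      (filter (fun i => Nat.eqb (fst (pl i)) j) (seq 0 n)) in
  let sort_cost := fold_right Nat.add 0%nat
                      (map (fun j => isort_cost (bucket j)) (seq 0 (S n))) in
  (dist_cost + sort_cost)%nat.

(* Membership in the class A_c for arrays of size n, where "described by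
   O(n^c) bits" is made explicit as: at most C * n^c bits in the fixed
   description scheme dec. *)
Definition in_Ac (c C : R) (dec : nat -> list bool -> stree) (n : nat)
    (A : bucket_alg) : Prop :=
  (forall k, (1 <= k)%nat -> (k < n)%nat -> ba_bound A k < ba_bound A (S k)) /\
  length (ba_codes A) = n /\
  (forall i, (i < n)%nat ->
     INR (length (nth i (ba_codes A) [])) <= C * Rpower (INR n) c /\
     stree_ok n (dec n (nth i (ba_codes A) []))).

Definition cost_class (c C : R) (dec : nat -> list bool -> stree) (n : nat)
    (h : list R -> R) : Prop :=
  exists A, in_Ac c C dec n A /\ forall x, h x = INR (cost dec n A x).

(* Main.v *)
Require Import Defs.
From Stdlib Require Import Reals List Arith Lia Lra ZArith.
From Stdlib Require Import IndefiniteDescription.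
Import ListNotations.
Open Scope R_scope.

Lemma ln_le' x y : 0 < x -> x <= y -> ln x <= ln y.
Proof. intros hx [h|h]. left; apply ln_increasing; auto. subst; lra. Qed.

Lemma ln_le_xm1 y : 0 < y -> ln y <= y - 1.
Proof. intros hy. pose proof (exp_ineq1_le (ln y)). rewrite exp_ln in H; lra. Qed.

Lemma ln_pos x : 1 < x -> 0 < ln x.
Proof. intros. rewrite <- ln_1. apply ln_increasing; lra. Qed.

Lemma ln_nonneg x : 1 <= x -> 0 <= ln x.
Proof. intros [h|h]. left; apply ln_pos; auto. subst; rewrite ln_1; lra. Qed.

Definition KK (c C : R) := 4 * ((C + 2) * ln 2 + 2 * (ln 3 + ln 8) + 4 / c).

Lemma final_real (c C : R) (n m L : nat) : 0 < c -> 0 < C -> (1 <= n)%nat ->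
  INR L <= C * Rpower (INR n) c + 1 ->
  (2^m <= 2^((L+1)*n) * (m*n+2)^(n+1))%nat ->
  INR m <= KK c C * Rpower (INR n) (1+c).
Proof.
  intros hc hC hn hL H.
  assert (hn1 : 1 <= INR n) by (apply (le_INR 1); auto).
  set (N := INR n) in *.
  set (P := Rpower N c) in *.
  assert (hlnN : 0 <= ln N) by (apply ln_nonneg; auto).
  assert (hP1 : 1 <= P).
  { unfold P, Rpower. pose proof (exp_ineq1_le (c * ln N)). nra. }
  assert (hlnP : c * ln N <= P).
  { pose proof (ln_le_xm1 P ltac:(lra)). unfold P at 1 in H0. rewrite ln_Rpower in H0. lra. }
  assert (hlnN' : ln N <= P / c).
  { apply Rmult_le_reg_l with c; auto. field_simplify; lra. }
  assert (hRP : Rpower N (1 + c) = N * P).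
  { unfold P; rewrite Rpower_plus, Rpower_1; lra. }
  rewrite hRP.
  assert (l2 := ln_lt_2).
  assert (l3 : 0 < ln 3) by (apply ln_pos; lra).
  assert (l8 : 0 < ln 8) by (apply ln_pos; lra).
  destruct m as [|m'].
  { simpl. unfold KK. assert (0 < 4/c) by (apply Rdiv_lt_0_compat; lra).
    apply Rmult_le_pos; [|nra]. assert (0 < (C+2) * ln 2) by nra. lra. }
  set (m := S m') in *.
  assert (hm1 : 1 <= INR m) by (apply (le_INR 1); unfold m; lia).
  set (Mr := INR m) in *.
  apply le_INR in H.
  rewrite mult_INR, !pow_INR, plus_INR, mult_INR in H.
  replace (INR 2) with 2 in H by (simpl; lra).
  fold N Mr in H.
  assert (hA : Mr * ln 2 <= INR ((L+1)*n) * ln 2 + INR (n+1) * ln (Mr * N + 2)).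
  { rewrite <- !ln_pow by nra. replace (Mr * ln 2) with (ln (2^m)) by (rewrite ln_pow; [reflexivity|lra]). rewrite <- ln_mult by (apply pow_lt; nra).
    apply ln_le'; auto. apply pow_lt; lra. }
  rewrite mult_INR, !plus_INR in hA. fold N in hA. simpl INR in hA.
  assert (hB : ln (Mr * N + 2) <= ln 3 + ln Mr + ln N).
  { rewrite <- !ln_mult by nra. apply ln_le'; nra. }
  assert (hC' : ln Mr <= ln 8 + ln N + Mr / (8 * N) - 1).
  { pose proof (ln_le_xm1 (Mr / (8*N)) ltac:(apply Rdiv_lt_0_compat; nra)).
    unfold Rdiv in H0. rewrite ln_mult in H0 by (try apply Rinv_0_lt_compat; nra).
    rewrite ln_Rinv in H0 by nra. rewrite ln_mult in H0 by lra. unfold Rdiv. lra. }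
  assert (hX : ln (Mr * N + 2) <= (ln 3 + ln 8) + 2 * ln N + Mr / (8 * N)) by lra.
  assert (hpos : 0 <= (ln 3 + ln 8) + 2 * ln N + Mr / (8 * N)).
  { assert (0 <= Mr / (8*N)) by (unfold Rdiv; apply Rmult_le_pos; [lra|left; apply Rinv_0_lt_compat; nra]). lra. }
  assert (hY : (N + 1) * ln (Mr * N + 2) <= 2 * N * ((ln 3 + ln 8) + 2 * ln N + Mr / (8 * N))).
  { apply Rle_trans with ((N+1) * ((ln 3 + ln 8) + 2 * ln N + Mr / (8 * N))).
    apply Rmult_le_compat_l; lra. apply Rmult_le_compat_r; lra. }
  replace (2 * N * ((ln 3 + ln 8) + 2 * ln N + Mr / (8 * N))) with
    (2 * N * (ln 3 + ln 8) + 4 * (N * ln N) + Mr / 4) in hY by (field; lra).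
  assert (hNl : N * ln N <= N * (P / c)) by (apply Rmult_le_compat_l; lra).
  replace (N * (P/c)) with ((N * P) * / c) in hNl by (field; lra).
  assert (hic : 0 < / c) by (apply Rinv_0_lt_compat; lra).
  unfold KK. unfold Rdiv.
  assert (hLn : (INR L + 1) * N * ln 2 <= (C * P + 2) * N * ln 2).
  { apply Rmult_le_compat_r; [lra|]. apply Rmult_le_compat_r; lra. }
  assert (hNP : N <= N * P) by nra.
  assert (h2 : 2 * N * (ln 3 + ln 8) <= 2 * (N * P) * (ln 3 + ln 8)) by nra.
  assert (h3 : 2 * N * ln 2 <= 2 * (N*P) * ln 2) by nra.
  nra.
Qed.

Definition agree (n : nat) (b b' : nat -> R) (x : R) :=
  forall k, (k <= n)%nat -> (x <= b k <-> x <= b' k).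

Lemma ts_agree n b b' x t : stree_ok n t -> agree n b b' x ->
  forall lo hi, tree_search b x t lo hi = tree_search b' x t lo hi.
Proof.
  intros Hok Ha. induction t as [|k l IHl r IHr]; intros lo hi; simpl; auto.
  simpl in Hok. destruct Hok as [Hk [Hl Hr]].
  assert (Hk' := Ha k ltac:(lia)).
  destruct (Rle_dec x (b k)); destruct (Rle_dec x (b' k)).
  - rewrite IHl; auto.
  - exfalso; apply n0; apply Hk'; auto.
  - exfalso; apply n0; apply Hk'; auto.
  - rewrite IHr; auto.
Qed.

Lemma ts_hi b x t : forall lo hi lo' hi' c,
  tree_search b x t lo hi = (lo', hi', c) -> (hi' <= hi)%nat.
Proof.
  induction t as [|k l IHl r IHr]; intros lo hi lo' hi' c E; simpl in E.
  - inversion E; lia.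
  - destruct (Rle_dec x (b k)).
    + destruct (tree_search b x l lo (Nat.min hi (k-1))) as [[a1 a2] a3] eqn:E1.
      inversion E; subst. apply IHl in E1. lia.
    + destruct (tree_search b x r (Nat.max lo k) hi) as [[a1 a2] a3] eqn:E1.
      inversion E; subst. apply IHr in E1. lia.
Qed.

Lemma bs_agree n b b' x : agree n b b' x ->
  forall fuel lo hi, (hi <= n)%nat -> bsearch fuel b x lo hi = bsearch fuel b' x lo hi.
Proof.
  intros Ha fuel. induction fuel as [|f IH]; intros lo hi Hhi; [reflexivity|]; cbn [bsearch].
  destruct (lo <? hi)%nat eqn:Elt; auto.
  apply Nat.ltb_lt in Elt.
  assert (Hmid : ((lo + hi + 1) / 2 <= hi)%nat).
  { apply Nat.Div0.div_le_upper_bound; lia. }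
  set (mid := ((lo + hi + 1) / 2)%nat) in *.
  assert (Hk' := Ha mid (Nat.le_trans _ _ _ Hmid Hhi)).
  destruct (Rle_dec x (b mid));
  destruct (Rle_dec x (b' mid)).
  - rewrite IH by lia; auto.
  - exfalso; apply n0; apply Hk'; auto.
  - exfalso; apply n0; apply Hk'; auto.
  - rewrite IH by lia; auto.
Qed.

Lemma place_agree n b b' t x : stree_ok n t -> agree n b b' x ->
  place n b t x = place n b' t x.
Proof.
  intros Hok Ha. unfold place. rewrite (ts_agree n b b' x t Hok Ha).
  destruct (tree_search b' x t 0 n) as [[lo hi] c] eqn:E.
  apply ts_hi in E. rewrite (bs_agree n b b' x Ha); auto.
Qed.

Definition costE (n : nat) (x : list R) (pl : nat -> nat * nat) : nat :=
  let dist_cost := fold_right Nat.add 0%nat (map (fun i => snd (pl i)) (seq 0 n)) in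
  let bucket j := map (fun i => nth i x 0)
                      (filter (fun i => Nat.eqb (fst (pl i)) j) (seq 0 n)) in
  let sort_cost := fold_right Nat.add 0%nat
                      (map (fun j => isort_cost (bucket j)) (seq 0 (S n))) in
  (dist_cost + sort_cost)%nat.

Lemma cost_costE dec n A x : cost dec n A x =
  costE n x (fun i => place n (ba_bound A) (dec n (nth i (ba_codes A) [])) (nth i x 0)).
Proof. reflexivity. Qed.

Lemma costE_ext n x pl pl' : (forall i, (i < n)%nat -> pl i = pl' i) ->
  costE n x pl = costE n x pl'.
Proof.
  intros H. unfold costE.
  assert (H1 : map (fun i => snd (pl i)) (seq 0 n) = map (fun i => snd (pl' i)) (seq 0 n)).
  { apply map_ext_in. intros a Ha. apply in_seq in Ha. rewrite H; auto; lia. }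
  rewrite H1. f_equal. f_equal. apply map_ext. intros j. f_equal. f_equal.
  apply filter_ext_in. intros a Ha. apply in_seq in Ha. rewrite H; auto; lia.
Qed.

Lemma cost_agree dec n A A' x :
  ba_codes A = ba_codes A' ->
  (forall i, (i < n)%nat -> stree_ok n (dec n (nth i (ba_codes A) []))) ->
  (forall i, (i < n)%nat -> agree n (ba_bound A) (ba_bound A') (nth i x 0)) ->
  cost dec n A x = cost dec n A' x.
Proof.
  intros Hc Hok Ha. rewrite !cost_costE. rewrite <- Hc. apply costE_ext.
  intros i Hi. apply place_agree; auto.
Qed.

Definition cnt (S : list R) (y : R) : nat :=
  length (filter (fun s => if Rle_dec s y then true else false) S).

Lemma cnt_le S y : (cnt S y <= length S)%nat.
Proof. unfold cnt. apply filter_length_le. Qed.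

Lemma cnt_mono S y y' : y <= y' -> (cnt S y <= cnt S y')%nat.
Proof.
  intros Hy. induction S as [|a S IH]; simpl; auto.
  unfold cnt in *; simpl.
  destruct (Rle_dec a y); destruct (Rle_dec a y'); simpl; try lia.
  exfalso; lra.
Qed.

Lemma cnt_agree1 S y y' : y <= y' -> cnt S y = cnt S y' ->
  forall s, In s S -> s <= y' -> s <= y.
Proof.
  intros Hy. induction S as [|a S IH]; intros Hc s Hs Hs'; [destruct Hs|].
  pose proof (cnt_mono S y y' Hy) as Hm.
  unfold cnt in Hc, Hm, IH; simpl in Hc.
  destruct (Rle_dec a y); destruct (Rle_dec a y'); simpl in Hc; try (exfalso; lra).
  - destruct Hs as [<-|Hs]; [assumption|]. apply IH; [lia|assumption|assumption].
  - lia.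
  - destruct Hs as [<-|Hs]; [lra|]. apply IH; [lia|assumption|assumption].
Qed.

Lemma cnt_agree S y y' : cnt S y = cnt S y' ->
  forall s, In s S -> (s <= y <-> s <= y').
Proof.
  intros Hc s Hs. destruct (Rle_dec y y') as [H|H].
  - split; intros; [lra|]. eapply cnt_agree1; eauto.
  - split; intros; [|lra]. apply (cnt_agree1 S y' y); auto; lra.
Qed.

Fixpoint uptoL (L : nat) : list (list bool) :=
  match L with
  | O => [[]]
  | S L => [] :: map (cons true) (uptoL L) ++ map (cons false) (uptoL L)
  end.

Lemma uptoL_in L : forall l, (length l <= L)%nat -> In l (uptoL L).
Proof.
  induction L as [|L IH]; intros l Hl.
  - destruct l; simpl in *; [auto|lia].
  - destruct l as [|a l]; simpl; [auto|]. right. simpl in Hl.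
    apply in_or_app. destruct a; [left|right]; apply in_map; apply IH; lia.
Qed.

Lemma uptoL_len L : (length (uptoL L) + 1 <= 2 ^ (L + 1))%nat.
Proof.
  induction L as [|L IH]; [simpl; auto|].
  cbn [uptoL length]. rewrite length_app, !length_map.
  replace (S L + 1)%nat with (S (L + 1)) by lia. rewrite Nat.pow_succ_r'. lia.
Qed.

Fixpoint tuples {A : Type} (n : nat) (X : list A) : list (list A) :=
  match n with
  | O => [[]]
  | S n => flat_map (fun x => map (cons x) (tuples n X)) X
  end.

Lemma tuples_len {A} n (X : list A) : length (tuples n X) = (length X ^ n)%nat.
Proof.
  induction n as [|n IH]; simpl; auto.
  rewrite (flat_map_constant_length (c := length (tuples n X))).
  - rewrite IH. lia.
  - intros; apply length_map.
Qed.

Lemma tuples_in {A} n (X : list A) : forall l, length l = n ->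
  (forall a, In a l -> In a X) -> In l (tuples n X).
Proof.
  induction n as [|n IH]; intros l Hl HX.
  - destruct l; simpl in *; [auto|lia].
  - destruct l as [|a l]; simpl in *; [lia|].
    apply in_flat_map. exists a. split; auto. apply in_map. apply IH; auto.
Qed.

Lemma tuples_length {A} n (X : list A) : forall l, In l (tuples n X) -> length l = n.
Proof.
  induction n as [|n IH]; intros l Hl; simpl in Hl.
  - destruct Hl as [<-|[]]; auto.
  - apply in_flat_map in Hl. destruct Hl as [x [_ Hx]]. apply in_map_iff in Hx.
    destruct Hx as [l' [<- Hl']]. simpl. f_equal; auto.
Qed.

Lemma fm_nodup {A} (T : list (list A)) (Y : list A) : NoDup T -> NoDup Y ->
  NoDup (flat_map (fun x => map (cons x) T) Y).
Proof.
  intros HT HY. induction Y as [|x Y IHY]; simpl; [constructor|].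
  inversion HY; subst. apply NoDup_app.
  - apply NoDup_map_NoDup_ForallPairs; auto. intros a b _ _ H; inversion H; auto.
  - apply IHY; auto.
  - intros a Ha Hb. apply in_map_iff in Ha. destruct Ha as [t [<- _]].
    apply in_flat_map in Hb. destruct Hb as [y [Hy Hb]]. apply in_map_iff in Hb.
    destruct Hb as [t' [E _]]. inversion E; subst. auto.
Qed.

Lemma tuples_nodup {A} n (X : list A) : NoDup X -> NoDup (tuples n X).
Proof.
  intros HX. induction n as [|n IH]; simpl.
  - constructor; [auto|constructor].
  - apply fm_nodup; auto.
Qed.

Lemma pigeon {A B} (V : list A) (Sg : list B) (f : A -> B) : NoDup V ->
  (forall v w, In v V -> In w V -> f v = f w -> v = w) ->
  (forall v, In v V -> In (f v) Sg) -> (length V <= length Sg)%nat.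
Proof.
  intros HV Hi Hin. rewrite <- (length_map f V). apply NoDup_incl_length.
  - apply NoDup_map_NoDup_ForallPairs; [|exact HV]. intros a b Ha Hb; apply Hi; auto.
  - intros b Hb. apply in_map_iff in Hb. destruct Hb as [a [<- Ha]]. auto.
Qed.
Lemma nth_map_seq (f : nat -> nat) n k : (k < S n)%nat -> nth k (map f (seq 0 (S n))) 0%nat = f k.
Proof.
  intros Hk. rewrite (nth_indep _ _ (f 0%nat)) by (rewrite length_map, length_seq; lia).
  rewrite map_nth, seq_nth by lia. reflexivity.
Qed.

Lemma up_nat (x : R) : 0 < x -> exists L : nat, x <= INR L <= x + 1.
Proof.
  intros hx. destruct (archimed x) as [h1 h2].
  assert (hz : (0 <= up x)%Z) by (apply le_IZR; lra).
  exists (Z.to_nat (up x)). rewrite INR_IZR_INZ, Z2Nat.id by auto. lra.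
Qed.

Theorem mainTheorem4 :
  forall (c : R), 0 < c ->
  forall (C : R), 0 < C ->
  forall (dec : nat -> list bool -> stree),
  exists K : R, exists N0 : nat,
    forall n : nat, (N0 <= n)%nat ->
    forall (m : nat) (pts : nat -> list R),
      shatters_on (fun x : list R => length x = n) (cost_class c C dec n) m pts ->
      INR m <= K * Rpower (INR n) (1 + c).
Proof.
  intros c hc C hC dec. exists (KK c C), 1%nat.
  intros n hn m pts [Hdom [_ [r Hr]]].
  assert (hP : 0 < C * Rpower (INR n) c) by (apply Rmult_lt_0_compat; [lra|apply exp_pos]).
  destruct (up_nat _ hP) as [L [HL1 HL2]].
  set (Sx := 0 :: flat_map pts (seq 0 m)).
  assert (HSlen : length Sx = S (m * n)).
  { unfold Sx. simpl. f_equal. rewrite (flat_map_constant_length (c := n)).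
    - rewrite length_seq; lia.
    - intros i Hi. apply in_seq in Hi. apply Hdom. lia. }
  set (goodA := fun (v : list bool) (A : bucket_alg) => in_Ac c C dec n A /\
     forall i, (i < m)%nat -> (INR (cost dec n A (pts i)) > r i <-> nth i v false = true)).
  assert (Hex : forall v, exists A, goodA v A).
  { intros v. destruct (Hr (fun i => nth i v false = true)) as [h [[A [HA Hh]] Hh']].
    exists A. split; auto. intros i Hi. rewrite <- Hh. auto. }
  set (fA := fun v => proj1_sig (constructive_indefinite_description _ (Hex v))).
  assert (HfA : forall v, goodA v (fA v)).
  { intros v. unfold fA. destruct (constructive_indefinite_description _ (Hex v)); auto. }
  set (sg := fun A : bucket_alg => (ba_codes A, map (fun k => cnt Sx (ba_bound A k)) (seq 0 (S n)))).
  set (Sg := list_prod (tuples n (uptoL L)) (tuples (S n) (seq 0 (S (length Sx))))).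
  assert (Hpig : (length (tuples m [true; false]) <= length Sg)%nat).
  { apply (pigeon _ _ (fun v => sg (fA v))).
    - apply tuples_nodup. constructor; [simpl; intros [H|H]; [discriminate|auto]|].
      constructor; [auto|constructor].
    - intros v w Hv Hw E. unfold sg in E. assert (Ec := f_equal fst E). assert (Eb := f_equal snd E). cbn [fst snd] in Ec, Eb. clear E.
      destruct (HfA v) as [[_ [_ Hok]] Hv']. destruct (HfA w) as [_ Hw'].
      apply tuples_length in Hv. apply tuples_length in Hw.
      apply nth_ext with false false; [congruence|]. intros i Hi. rewrite Hv in Hi.
      assert (Hcost : cost dec n (fA v) (pts i) = cost dec n (fA w) (pts i)).
      { apply cost_agree; auto.
        - intros j Hj. apply Hok; auto.
        - intros j Hj k Hk.
          assert (Hk' : cnt Sx (ba_bound (fA v) k) = cnt Sx (ba_bound (fA w) k)).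
          { assert (E2 := f_equal (fun l => nth k l 0%nat) Eb). cbv beta in E2.
            rewrite !nth_map_seq in E2 by lia. exact E2. }
          apply (cnt_agree _ _ _ Hk'). unfold Sx. right. apply in_flat_map.
          exists i. split; [apply in_seq; lia|]. apply nth_In. rewrite Hdom; lia. }
      specialize (Hv' i Hi). specialize (Hw' i Hi). rewrite Hcost in Hv'.
      destruct (nth i v false), (nth i w false); auto.
      + symmetry; apply Hw'; apply Hv'; auto.
      + apply Hv'; apply Hw'; auto.
    - intros v _. destruct (HfA v) as [[_ [Hlen Hok]] _]. unfold sg, Sg.
      apply in_prod.
      + apply tuples_in; auto. intros a Ha. apply (In_nth _ _ []) in Ha.
        destruct Ha as [i [Hi <-]]. rewrite Hlen in Hi. apply uptoL_in.
        apply INR_le. destruct (Hok i Hi) as [H1 _]. lra.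
      + apply tuples_in; [rewrite length_map, length_seq; auto|].
        intros a Ha. apply in_map_iff in Ha. destruct Ha as [k [<- _]].
        apply in_seq. pose proof (cnt_le Sx (ba_bound (fA v) k)). lia. }
  unfold Sg in Hpig. rewrite length_prod, !tuples_len, length_seq, HSlen in Hpig.
  simpl length in Hpig.
  apply (final_real c C n m L); auto.
  eapply Nat.le_trans; [exact Hpig|].
  rewrite Nat.pow_mul_r. apply Nat.mul_le_mono.
  - apply Nat.pow_le_mono_l. pose proof (uptoL_len L). lia.
  - replace (n + 1)%nat with (S n) by lia. apply Nat.pow_le_mono_l. lia.
Qed.
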